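(* Let $\mathcal A\in\mathbb R^{n_1}\otimes\cdots\otimes\mathbb R^{n_k}$, $1\le s\le k$, $r\le\min\{n_1,\dots,n_s\}$, and consider the problem $\mathrm{mLRPOTA}(r)$. At every feasible point of this problem, the linear independence constraint qualification holds, i.e. the gradients of the constraint functions are linearly independent. In particular, at any local maximizer $U$ the KKT conditions hold and the set of Lagrange multipliers associated with $U$ is a singleton.
   Context: Problem $\mathrm{mLRPOTA}(r)$: maximize $\sum_{j=1}^r\big(((U^{(1)})^{\mathsf T},\dots,(U^{(k)})^{\mathsf T})\cdot\mathcal A\big)_{j\cdots j}^2=\sum_{j=1}^r\langle\mathcal A,\mathbf u^{(1)}_j\otimes\cdots\otimes\mathbf u^{(k)}_j\rangle^2$ over $U=(U^{(1)},\dots,U^{(k)})$, $U^{(i)}\in\mathbb R^{n_i\times r}$ with columns $\mathbf u^{(i)}_j$, subject to the equality constraints $(U^{(i)})^{\mathsf T}U^{(i)}=I_r$ for $i=1,\dots,s$ (the entries $(a,b)$, $a\le b$, of the symmetric matrix $(U^{(i)})^{\mathsf T}U^{(i)}-I_r$ being the constraint functions) and $((U^{(i)})^{\mathsf T}U^{(i)})_{jj}=1$ for $j=1,\dots,r$, $i=s+1,\dots,k$. *)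

(* Defs.v *)
From HB Require Import structures.
From mathcomp Require Import all_boot all_order all_algebra.
From mathcomp Require Import all_classical all_reals all_analysis.
Set Implicit Arguments. Unset Strict Implicit. Unset Printing Implicit Defensive.
Import Order.TTheory GRing.Theory Num.Theory.
Local Open Scope ring_scope.

Section MLRPOTA.
Variables (R : realType) (k : nat) (n : 'I_k -> nat) (r : nat).

Definition tindex := {dffun forall i : 'I_k, 'I_(n i)}.
Definition tensor := {ffun tindex -> R}.
Definition var := forall i : 'I_k, 'M[R]_(n i, r).

Definition tcontract (A : tensor) (U : var) (j : 'I_r) : R :=
  \sum_(idx : tindex) A idx * \prod_(i < k) U i (idx i) j.

Definition objective (A : tensor) (U : var) : R :=
  \sum_(j < r) (tcontract A U j) ^+ 2.

(* constraint labels (i, a, b) (0-indexed modes): for mode i < s all (a,b)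
   with a <= b; for mode i >= s only the diagonal a = b *)
Definition cvalid (s : nat) (c : 'I_k * 'I_r * 'I_r) : bool :=
  let: (i, a, b) := c in
  if (i < s)%N then (a <= b)%N else a == b.

Definition clabel (s : nat) := {c : 'I_k * 'I_r * 'I_r | cvalid s c}.

Definition cfun (c : 'I_k * 'I_r * 'I_r) (U : var) : R :=
  let: (i, a, b) := c in ((U i)^T *m U i) a b - (a == b)%:R.

Definition feasible (s : nat) (U : var) : Prop :=
  forall c : clabel s, cfun (val c) U = 0.

Definition var_shift (U V : var) (t : R) : var := fun i => U i + t *: V i.

(* directional derivative of f at U in direction V, i.e. <grad f(U), V> *)
Definition dirderiv (f : var -> R) (U V : var) : R :=
  derive1 (fun t : R => f (var_shift U V t)) 0.

Definition LICQ (s : nat) (U : var) : Prop :=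
  forall lam : {ffun clabel s -> R},
    (forall V : var, \sum_(c : clabel s) lam c * dirderiv (cfun (val c)) U V = 0) ->
    forall c, lam c = 0.

Definition KKT (s : nat) (A : tensor) (U : var) (lam : {ffun clabel s -> R}) : Prop :=
  feasible s U /\
  forall V : var,
    dirderiv (objective A) U V = \sum_(c : clabel s) lam c * dirderiv (cfun (val c)) U V.

Definition local_maximizer (s : nat) (A : tensor) (U : var) : Prop :=
  feasible s U /\
  exists e : R, 0 < e /\
    forall V : var, feasible s V ->
      (forall i p j, `|V i p j - U i p j| < e) -> objective A V <= objective A U.

End MLRPOTA.

(* Main.v *)
Require Import Defs.
From HB Require Import structures.
From mathcomp Require Import all_boot all_order all_algebra.
From mathcomp Require Import all_classical all_reals all_analysis.
From mathcomp.algebra_tactics Require Import ring lra.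
Import Order.TTheory GRing.Theory Num.Theory numFieldNormedType.Exports.
Local Open Scope classical_set_scope.
Local Open Scope ring_scope.
Section Deriv.
Context {R : realType}.

Implicit Types (f g : R -> R).
Lemma dM {f g x df dg} : is_derive x (1:R) f df -> is_derive x (1:R) g dg ->
  is_derive x (1:R) (fun t => f t * g t) (f x * dg + g x * df).
Proof. move=> F G; have := is_deriveM F G. done. Qed.
Lemma dD {f g x df dg} : is_derive x (1:R) f df -> is_derive x (1:R) g dg ->
  is_derive x (1:R) (fun t => f t + g t) (df + dg).
Proof. move=> F G; have := is_deriveD F G. done. Qed.
Lemma dC (c x : R) : is_derive x (1:R) (fun _ => c) 0.
Proof. exact: is_derive_cst. Qed.
Lemma dI (x : R) : is_derive x (1:R) (fun t => t) 1.
Proof. exact: is_derive_id. Qed.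
Lemma dS {I : finType} {h : I -> R -> R} {dh x} (P : pred I) :
  (forall i, is_derive x (1:R) (h i) (dh i)) ->
  is_derive x (1:R) (fun t => \sum_(i | P i) h i t) (\sum_(i | P i) dh i).
Proof.
move=> H. rewrite unlock.
elim: (index_enum I) => [|a l IH] /=; first exact: dC.
case: (P a) => //. exact: dD.
Qed.
Lemma dV {f x df} : f x != 0 -> is_derive x (1:R) f df ->
  is_derive x (1:R) (fun t => (f t)^-1) (- (f x) ^- 2 * df).
Proof. move=> H F; have := is_deriveV H F. done. Qed.

Lemma fermat (f : R -> R) (c d : R) : is_derive c (1:R) f d ->
  (\forall t \near c, f t <= f c) -> d = 0.
Proof.
move=> fd cmax.
have fdrvbl : derivable f c 1 by case: fd.
rewrite -(@derive_val _ _ _ _ _ _ _ fd).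
apply/eqP; rewrite eq_le; apply/andP; split.
  rewrite ['D_1 f c]cvg_at_rightE; last exact: fdrvbl.
  apply: limr_le.
    have dfc := fdrvbl.
    rewrite -(cvg_at_rightE (fun h : R => h^-1 *: ((f \o shift c) _ - f c))) //.
    apply: cvg_trans dfc; apply: cvg_app.
    move=> A [e egt0 Ae]; exists e => // x xe xgt0; apply: Ae => //.
    exact/lt0r_neq0.
  near=> h; apply: mulr_ge0_le0.
    by rewrite invr_ge0; apply: ltW; near: h; exists 1 => /=.
  rewrite subr_le0 [_%:A]mulr1 /=.
  near: h.
  case/nbhs_ballP: cmax => e e0 H.
  exists e => // h hb hpos; apply: H.
  move: hb; rewrite /ball /= !sub0r normrN => hb.
  by rewrite opprD addrCA subrr addr0 normrN.
rewrite ['D_1 f c]cvg_at_leftE; last exact: fdrvbl.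
apply: limr_ge.
  have dfc := fdrvbl; rewrite -(cvg_at_leftE (fun h => h^-1 *: ((f \o shift c) _ - f c))) //.
  apply: cvg_trans dfc; apply: cvg_app.
  move=> A [e egt0 Ae]; exists e => // x xe xgt0; apply: Ae => //.
  exact/ltr0_neq0.
near=> h; apply: mulr_le0.
  by rewrite invr_le0; apply: ltW; near: h; exists 1 => /=.
rewrite subr_le0 [_%:A]mulr1; near: h.
case/nbhs_ballP: cmax => e e0 H.
exists e => // h hb hpos; apply: H.
move: hb; rewrite /ball /= !sub0r normrN => hb.
by rewrite opprD addrCA subrr addr0 normrN.
Unshelve. all: by end_near. Qed.

Lemma dP (I : eqType) (s : seq I) (h : I -> R -> R) dh x :
  uniq s -> (forall i, is_derive x (1:R) (h i) (dh i)) ->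
  is_derive x (1:R) (fun t => \prod_(i <- s) h i t)
    (\sum_(m <- s) dh m * \prod_(i <- s | i != m) h i x).
Proof.
move=> + H; elim: s => [|a l IH] /=.
  move=> _; have -> : (fun t => \prod_(i <- [::]) h i t) = (fun _ => 1).
    by apply: funext => t; rewrite big_nil.
  by rewrite big_nil; exact: dC.
case/andP=> al ul.
have E : (fun t => \prod_(i <- a :: l) h i t) = (fun t => h a t * \prod_(i <- l) h i t).
  by apply: funext => t; rewrite big_cons.
rewrite E; have := dM (H a) (IH ul) => /is_derive_eq; apply.
rewrite big_cons [X in dh a * X]big_cons eqxx /=.
have -> : \prod_(i <- l | i != a) h i x = \prod_(i <- l) h i x.
  rewrite big_seq_cond [RHS]big_seq; apply: eq_bigl => i.
  by case: (boolP (i \in l)) => //= il; apply/negP => /eqP ia; rewrite -ia il in al.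
rewrite addrC mulrC; congr (_ + _).
rewrite big_seq [in RHS]big_seq mulr_sumr; apply: eq_bigr => m ml.
rewrite big_cons; have -> : (a != m) by apply/negP => /eqP am; rewrite am ml in al.
by rewrite mulrCA.
Qed.
End Deriv.

Section Main.
Variables (R : realType) (k : nat) (n : 'I_k -> nat) (r : nat) (A : tensor R n).
Local Notation var := (var R n r).

Definition Gd (U : var) (i : 'I_k) (p : 'I_(n i)) (y : 'I_r) : R :=
  2 * tcontract A U y * \sum_(idx : tindex n)
     ((idx i == p)%:R * A idx * \prod_(m < k | m != i) U m (idx m) y).
Definition Dobj (U V : var) : R :=
  \sum_(i < k) \sum_(p < n i) \sum_(y < r) Gd U i p y * V i p y.

Lemma Dobj_alt U V : Dobj U V = \sum_(j < r) 2 * tcontract A U j *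
  \sum_(idx : tindex n) A idx * \sum_(m < k) V m (idx m) j * \prod_(i < k | i != m) U i (idx i) j.
Proof.
rewrite /Dobj.
transitivity (\sum_(i<k) \sum_(y<r) 2 * tcontract A U y * \sum_(idx : tindex n)
   A idx * V i (idx i) y * \prod_(m < k | m != i) U m (idx m) y).
  apply: eq_bigr => i _; rewrite exchange_big /=; apply: eq_bigr => y _.
  rewrite /Gd; under eq_bigr => p _ do rewrite -mulrA mulr_suml.
  rewrite -mulr_sumr exchange_big /=; congr (_ * _); apply: eq_bigr => idx _.
  rewrite (bigD1 (idx i)) //= eqxx mul1r [X in _ + X]big1 ?addr0; first by rewrite mulrAC.
  by move=> p /negbTE; rewrite eq_sym => ->; rewrite !mul0r.
rewrite exchange_big /=; apply: eq_bigr => y _.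
rewrite -mulr_sumr; congr (_ * _); rewrite exchange_big /=; apply: eq_bigr => idx _.
by rewrite mulr_sumr; apply: eq_bigr => m _; rewrite mulrA.
Qed.

Lemma tcontract_ext (U W : var) j : (forall i p j, W i p j = U i p j) ->
  tcontract A W j = tcontract A U j.
Proof.
by move=> H; apply: eq_bigr => idx _; congr (_ * _); apply: eq_bigr => i _; rewrite H.
Qed.

Lemma objective_ext (U W : var) : (forall i p j, W i p j = U i p j) ->
  objective A W = objective A U.
Proof. by move=> H; apply: eq_bigr => j _; rewrite (tcontract_ext _ _ _ H). Qed.

Lemma dSq {f : R -> R} {x df} : is_derive x (1:R) f df ->
  is_derive x (1:R) (fun t => f t ^+ 2) (2 * f x * df).
Proof.
move=> F; have -> : (fun t => f t ^+ 2) = (fun t => f t * f t).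
  by apply: funext => t; rewrite expr2.
have := dM F F => /is_derive_eq; apply; by rewrite mulr2n mulrDl mul1r mulrDl.
Qed.

Lemma chain_obj (g : R -> var) (x : R) (U V : var) :
  (forall i p j, is_derive x (1:R) (fun t => g t i p j) (V i p j)) ->
  (forall i p j, g x i p j = U i p j) ->
  is_derive x (1:R) (fun t => objective A (g t)) (Dobj U V).
Proof.
move=> Hd H0.
have Hc : forall j, is_derive x (1:R) (fun t => tcontract A (g t) j)
   (\sum_(idx : tindex n) A idx * \sum_(m < k) V m (idx m) j *
       \prod_(i < k | i != m) U i (idx i) j).
  move=> j; rewrite /tcontract; apply: dS => idx.
  have := dM (dC (A idx) x) (dP _ (index_enum _) (fun i t => g t i (idx i) j)
     (fun i => V i (idx i) j) x (index_enum_uniq _) (fun i => Hd i (idx i) j)).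
  move=> /is_derive_eq; apply; rewrite mulr0 addr0; congr (_ * _).
  apply: eq_bigr => m _; congr (_ * _); apply: eq_bigr => i _; exact: H0.
rewrite /objective; have := dS xpredT (fun j => dSq (Hc j)) => /is_derive_eq; apply.
rewrite Dobj_alt; apply: eq_bigr => j _; rewrite (tcontract_ext _ _ _ H0) //.
Qed.

Definition Dg (c : 'I_k * 'I_r * 'I_r) (U V : var) : R :=
  let: (i, a, b) := c in \sum_(p < n i) (V i p a * U i p b + U i p a * V i p b).

Lemma is_derive_ext (f g : R -> R) x d : (forall t, f t = g t) ->
  is_derive x (1:R) g d -> is_derive x (1:R) f d.
Proof. by move=> H; have -> : f = g by apply: funext. Qed.

Lemma dlin (a b x : R) : is_derive x (1:R) (fun t => a + t * b) b.
Proof.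
have := dD (dC a x) (dM (dI x) (dC b x)) => /is_derive_eq; apply.
by rewrite mulr0 add0r mulr1 add0r.
Qed.

Lemma cfun_E c (U : var) : cfun c U =
  (let: (i, a, b) := c in \sum_(p < n i) U i p a * U i p b - (a == b)%:R).
Proof.
case: c => [[i a] b] /=; rewrite !mxE; congr (_ - _).
by apply: eq_bigr => p _; rewrite mxE.
Qed.

Lemma chain_cfun c (g : R -> var) (x : R) (U V : var) :
  (forall i p j, is_derive x (1:R) (fun t => g t i p j) (V i p j)) ->
  (forall i p j, g x i p j = U i p j) ->
  is_derive x (1:R) (fun t => cfun c (g t)) (Dg c U V).
Proof.
move=> Hd H0; apply: is_derive_ext; first by move=> t; rewrite cfun_E.
case: c => [[i a] b] /=.
have := dD (dS xpredT (fun p => dM (Hd i p a) (Hd i p b))) (dC (- (a == b)%:R) x).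
move=> /is_derive_eq; apply; rewrite addr0; apply: eq_bigr => p _.
by rewrite !H0 addrC mulrC [U i p a * _]mulrC.
Qed.

Lemma shift_deriv (U V : var) i p j :
  is_derive (0:R) (1:R) (fun t => var_shift U V t i p j) (V i p j).
Proof. by apply: is_derive_ext (dlin _ _ _) => t; rewrite /var_shift !mxE. Qed.

Lemma shift0 (U V : var) i p j : var_shift U V 0 i p j = U i p j.
Proof. by rewrite /var_shift !mxE mul0r addr0. Qed.

Lemma dir_obj U V : dirderiv (objective A) U V = Dobj U V.
Proof.
have H := chain_obj _ _ _ _ (shift_deriv U V) (shift0 U V).
by rewrite /dirderiv derive1E; exact: (@derive_val _ _ _ _ _ _ _ H).
Qed.

Lemma dir_cfun c U V : dirderiv (cfun c) U V = Dg c U V.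
Proof.
have H := chain_cfun c _ _ _ _ (shift_deriv U V) (shift0 U V).
by rewrite /dirderiv derive1E; exact: (@derive_val _ _ _ _ _ _ _ H).
Qed.


Lemma feas_eq {s} {U : var} {i : 'I_k} {a b : 'I_r} : feasible s U -> cvalid s (i, a, b) ->
  \sum_(p < n i) U i p a * U i p b = (a == b)%:R.
Proof.
move=> F v; have := F (exist _ (i, a, b) v); rewrite cfun_E /=.
by move/eqP; rewrite subr_eq0 => /eqP.
Qed.

Lemma gram_lt {s} {U : var} {i : 'I_k} {a b : 'I_r} : feasible s U -> (i < s)%N ->
  \sum_(p < n i) U i p a * U i p b = (a == b)%:R.
Proof.
move=> F lt; case: (leqP a b) => ab.
  by apply: (feas_eq F); rewrite /cvalid lt.
rewrite eq_sym -(feas_eq (i:=i) (a:=b) (b:=a) F); last by rewrite /cvalid lt ltnW.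
by apply: eq_bigr => p _; rewrite mulrC.
Qed.

Lemma gram_diag {s} {U : var} {i : 'I_k} {a : 'I_r} : feasible s U ->
  \sum_(p < n i) U i p a * U i p a = 1.
Proof.
move=> F; rewrite (feas_eq F) ?eqxx //.
by rewrite /cvalid; case: ifP => _; rewrite ?leqnn ?eqxx.
Qed.

Lemma licq s (U : var) : feasible s U -> LICQ s U.
Proof.
move=> F lam H [[[i a] b] v0].
pose V : var := fun i' => \matrix_(p, x) (((i' == i) && (x == b))%:R * U i' p a).
have key : forall c : clabel k r s,
    Dg (val c) U V = (val c == (i, a, b))%:R * (1 + (a == b)%:R).
  move=> [[[i' a'] b'] v] /=; rewrite !xpair_eqE; move: v.
  case: (eqVneq i' i) => [->|ne] v; last first.
    rewrite /= mul0r; apply: big1 => p _; rewrite !mxE (negbTE ne) /=.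
    by rewrite !mul0r mulr0 addr0.
  rewrite /=.
  transitivity ((a' == b)%:R * \sum_(p < n i) U i p a * U i p b' +
                (b' == b)%:R * \sum_(p < n i) U i p a' * U i p a).
    rewrite !mulr_sumr -big_split /=; apply: eq_bigr => p _; rewrite !mxE eqxx /=.
    by rewrite -mulrA [U i p a' * _]mulrCA.
  case: (ltnP i s) => lt.
    rewrite !(gram_lt F lt).
    move: v v0; rewrite /cvalid lt => v v0.
    have [->|na] := eqVneq a' a; have [->|nb] := eqVneq b' b; rewrite /= ?eqxx ?mulr0 ?mul0r ?mulr1 ?mul1r ?addr0 ?add0r.
    - by case: (a == b); rewrite ?mulr1 ?mul0r addrC.
    - by case: (eqVneq a b) => [eab|]; rewrite ?mul0r // eab [b == b']eq_sym (negbTE nb) mulr0.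
    - by case: (eqVneq a' b) => [eab|]; rewrite ?mul0r // -eab [a == a']eq_sym (negbTE na) mulr0.
    - case: (eqVneq a' b) => [eab|]; rewrite ?mul0r //; case: (eqVneq a b') => [eab'|]; rewrite ?mulr0 //.
      by subst; case/negP: na; apply/eqP/val_inj/eqP; rewrite eqn_leq v v0.
  move: v v0; rewrite /cvalid ltnNge lt /= => /eqP e1 /eqP e2; subst b b'.
  rewrite andbb eqxx.
  by case: (eqVneq a' a) => [->|]; rewrite ?mul0r ?add0r // !(gram_diag F) !mul1r.
have := H V; under eq_bigr => c _ do rewrite dir_cfun key.
rewrite (bigD1 (exist _ (i, a, b) v0)) //= eqxx big1 ?addr0.
  move/eqP; rewrite mul1r mulf_eq0 => /orP [/eqP //|].
  by rewrite paddr_eq0 ?ler01 ?ler0n // oner_eq0.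
move=> c ne.
suff -> : (sval c == (i, a, b)) = false by rewrite mul0r mulr0.
apply/negbTE; apply: contra ne => /eqP e; apply/eqP; exact: val_inj.
Qed.


Lemma sum_clabel s (F : 'I_k * 'I_r * 'I_r -> R) :
  \sum_(c : clabel k r s) F (val c) = \sum_(x | cvalid s x) F x.
Proof.
symmetry; rewrite (reindex_omap (val : clabel k r s -> _) insub); last first.
  by move=> x Px; rewrite insubT.
apply: eq_bigl => -[x Px] /=; rewrite Px insubT /=.
by apply/eqP; congr Some; apply: val_inj.
Qed.

Lemma sum_triple (F : 'I_k * 'I_r * 'I_r -> R) :
  \sum_x F x = \sum_(i < k) \sum_(a < r) \sum_(b < r) F (i, a, b).
Proof.
rewrite pair_bigA /= pair_bigA /=; apply: eq_bigr => -[[i a] b] _ //.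
Qed.

Lemma curve_zero s (U : var) (g : R -> var) (V : var) :
  local_maximizer s A U ->
  (forall t, feasible s (g t)) ->
  (forall i p j, is_derive (0:R) (1:R) (fun t => g t i p j) (V i p j)) ->
  (forall i p j, g 0 i p j = U i p j) ->
  Dobj U V = 0.
Proof.
move=> [FU [e [e0 Hmax]]] Fg Hd H0.
have D := chain_obj _ _ _ _ Hd H0.
apply: (fermat _ _ _ D).
have nc : \forall t \near (0:R), forall i p j, `|g t i p j - U i p j| < e.
  apply: (@filter_forall R _ (fun i t => forall p j, `|g t i p j - U i p j| < e) (nbhs (0:R)) _) => i.
  apply: (@filter_forall R _ (fun p t => forall j, `|g t i p j - U i p j| < e) (nbhs (0:R)) _) => p.
  apply: (@filter_forall R _ (fun j t => `|g t i p j - U i p j| < e) (nbhs (0:R)) _) => j.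
  have cont : {for 0, continuous (fun t => g t i p j)}.
    by case: (Hd i p j) => /derivable1_diffP /differentiable_continuous.
  by have := cvgr_distC_lt _ _ cont e e0; rewrite H0; apply; exact: nbhs_filter.
apply: filterS nc => t Ht; rewrite (objective_ext _ _ H0).
exact: Hmax (Fg t) Ht.
Qed.


Definition cq (q t : R) := (1 - t * t * q) / (1 + t * t * q).
Definition sq (q t : R) := 2 * t / (1 + t * t * q).

Lemma den_pos (q t : R) : 0 <= q -> 0 < 1 + t * t * q.
Proof. move=> q0; have : 0 <= t * t by nra. nra. Qed.

Lemma cs_id (q t : R) : 0 <= q -> cq q t ^+ 2 + sq q t ^+ 2 * q = 1.
Proof.
move=> q0; have := den_pos q t q0 => /lt0r_neq0 D.
rewrite /cq /sq; field; exact: D.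
Qed.

Lemma cq0 (q : R) : cq q 0 = 1. Proof. by rewrite /cq !mul0r subr0 addr0 divr1. Qed.
Lemma sq0 (q : R) : sq q 0 = 0. Proof. by rewrite /sq mulr0 mul0r. Qed.

Lemma d_cs (q al be : R) : 0 <= q ->
  is_derive (0:R) (1:R) (fun t => cq q t * al + sq q t * be) (2 * be).
Proof.
move=> q0.
have E : forall t, cq q t * al + sq q t * be =
   ((al + t * (2 * be)) + t * t * (- q * al)) * (1 + t * t * q)^-1.
  move=> t; have := den_pos q t q0 => /lt0r_neq0 D.
  rewrite /cq /sq; field; exact: D.
apply: (is_derive_ext _ _ _ _ E).
have Dtt : is_derive (0:R) (1:R) (fun t : R => t * t) 0.
  by have := dM (dI (0:R)) (dI (0:R)) => /is_derive_eq; apply; rewrite mul0r add0r.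
have Dtq : forall c, is_derive (0:R) (1:R) (fun t : R => t * t * c) 0.
  by move=> c; have := dM Dtt (dC c (0:R)) => /is_derive_eq; apply; rewrite mulr0 add0r mulr0.
have N := dD (dlin al (2 * be) (0:R)) (Dtq (- q * al)).
have Dn := dD (dC (1:R) (0:R)) (Dtq q).
have Dv := dV (f := fun t : R => 1 + t * t * q) _ Dn.
have H1 : (1 + 0 * 0 * q : R) != 0 by rewrite mul0r mul0r addr0 oner_neq0.
have := dM N (Dv H1) => /is_derive_eq; apply.
by rewrite !mul0r !addr0 mulr0 invr1 mul1r mulr0 add0r.
Qed.


Lemma sum_lin2 (m : nat) (f g h : 'I_m -> R) (al be : R) :
  \sum_(p < m) (al * f p + be * g p) * h p =
  al * \sum_(p < m) f p * h p + be * \sum_(p < m) g p * h p.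
Proof. by rewrite !mulr_sumr -big_split /=; apply: eq_bigr => p _; ring. Qed.

Lemma sum_lin2r (m : nat) (f g h : 'I_m -> R) (al be : R) :
  \sum_(p < m) h p * (al * f p + be * g p) =
  al * \sum_(p < m) h p * f p + be * \sum_(p < m) h p * g p.
Proof. by rewrite !mulr_sumr -big_split /=; apply: eq_bigr => p _; ring. Qed.

Definition qW (W : var) (i0 : 'I_k) (a : 'I_r) : R := \sum_(p < n i0) W i0 p a ^+ 2.

Lemma qW_ge0 (W : var) i0 a : 0 <= qW W i0 a.
Proof. by apply: sumr_ge0 => p _; rewrite sqr_ge0. Qed.

Definition curveB (U W : var) (i0 : 'I_k) (a : 'I_r) (t : R) : var :=
  fun i => \matrix_(p, y) (if (i == i0) && (y == a)
     then cq (qW W i0 a) t * U i p a + sq (qW W i0 a) t * W i p a else U i p y).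

Definition dirB (W : var) (i0 : 'I_k) (a : 'I_r) : var :=
  fun i => \matrix_(p, y) (if (i == i0) && (y == a) then 2 * W i p a else 0).

Lemma curveB_deriv (U W : var) i0 a i p j :
  is_derive (0:R) (1:R) (fun t => curveB U W i0 a t i p j) (dirB W i0 a i p j).
Proof.
rewrite /dirB mxE; apply: (is_derive_ext _ _ _ _ (fun t => mxE _ _ _ _)) => /=.
case: ifP => _; last exact: dC.
exact: d_cs (qW_ge0 _ _ _).
Qed.

Lemma curveB0 (U W : var) i0 a i p j : curveB U W i0 a 0 i p j = U i p j.
Proof.
rewrite /curveB mxE; case: ifP => // /andP [_ /eqP ->].
by rewrite cq0 sq0 mul1r mul0r addr0.
Qed.

Lemma curveB_feas s (U W : var) i0 a : feasible s U ->
  \sum_(p < n i0) W i0 p a * U i0 p a = 0 ->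
  ((i0 < s)%N -> forall y, \sum_(p < n i0) W i0 p a * U i0 p y = 0) ->
  forall t, feasible s (curveB U W i0 a t).
Proof.
move=> FU h1 h2 t [[[i x] y] v]; rewrite cfun_E /=; apply/eqP; rewrite subr_eq0; apply/eqP.
under eq_bigr do rewrite !mxE.
case: (eqVneq i i0) => [ei|ne]; last first.
  by rewrite /=; exact: feas_eq FU v.
subst i.
have h1' : \sum_(p < n i0) U i0 p a * W i0 p a = 0.
  by rewrite -[RHS]h1; apply: eq_bigr => p _; rewrite mulrC.
move: v; case: (eqVneq x a) => [->|xa]; case: (eqVneq y a) => [->|ya] v /=.
- rewrite sum_lin2 !sum_lin2r (gram_diag FU) h1 h1' !mulr0 !addr0 mulr1.
  have -> : \sum_(p < n i0) W i0 p a * W i0 p a = qW W i0 a.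
    by apply: eq_bigr => p _; rewrite expr2.
  by rewrite add0r mulrA -!expr2 cs_id // qW_ge0.
- have lt : (i0 < s)%N.
    move: v; rewrite /cvalid; case: ifP => // _ /eqP e; by rewrite e eqxx in ya.
  by rewrite sum_lin2 (gram_lt FU lt) (h2 lt y) eq_sym (negbTE ya) !mulr0 addr0.
- have lt : (i0 < s)%N.
    move: v; rewrite /cvalid; case: ifP => // _ /eqP e; by rewrite e eqxx in xa.
  rewrite sum_lin2r (gram_lt FU lt) (negbTE xa) mulr0 add0r.
  have -> : \sum_(p < n i0) U i0 p x * W i0 p a = 0.
    by rewrite -[RHS](h2 lt x); apply: eq_bigr => p _; rewrite mulrC.
  by rewrite mulr0.
- exact: feas_eq FU v.
Qed.


Definition curveR (U : var) (i0 : 'I_k) (a b : 'I_r) (t : R) : var :=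
  fun i => \matrix_(p, y) (if i == i0 then
     (if y == a then cq 1 t * U i p a + sq 1 t * U i p b
      else if y == b then cq 1 t * U i p b + (- sq 1 t) * U i p a
      else U i p y) else U i p y).

Definition dirR (U : var) (i0 : 'I_k) (a b : 'I_r) : var :=
  fun i => \matrix_(p, y) (if i == i0 then
     (if y == a then 2 * U i p b else if y == b then 2 * (- U i p a) else 0) else 0).

Lemma curveR_deriv (U : var) i0 a b i p j :
  is_derive (0:R) (1:R) (fun t => curveR U i0 a b t i p j) (dirR U i0 a b i p j).
Proof.
rewrite /dirR mxE; apply: (is_derive_ext _ _ _ _ (fun t => mxE _ _ _ _)) => /=.
case: ifP => _; last exact: dC.
case: ifP => _; first exact: d_cs ler01.
case: ifP => _; last exact: dC.
apply: (is_derive_ext _ _ _ _ (fun t => congr1 (fun z => _ + z) (mulNr _ _))).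
apply: (is_derive_ext _ _ _ _ (fun t => congr1 (fun z => _ + z) (esym (mulrN _ _)))).
exact: d_cs ler01.
Qed.

Lemma curveR0 (U : var) i0 a b i p j : curveR U i0 a b 0 i p j = U i p j.
Proof.
rewrite /curveR mxE cq0 sq0 oppr0 !mul1r !mul0r !addr0.
by case: ifP => // _; case: ifP => [/eqP ->|_] //; case: ifP => [/eqP ->|].
Qed.

Lemma curveR_feas s (U : var) (i0 : 'I_k) (a b : 'I_r) : feasible s U -> (i0 < s)%N -> a != b ->
  forall t, feasible s (curveR U i0 a b t).
Proof.
move=> FU lt ab t [[[i x] y] v]; rewrite cfun_E /=; apply/eqP; rewrite subr_eq0; apply/eqP.
under eq_bigr do rewrite !mxE.
case: (eqVneq i i0) => [ei|ne]; last by rewrite /=; exact: feas_eq FU v.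
subst i => /=.
have CS := cs_id 1 t ler01; rewrite mulr1 in CS.
have ba : (b == a) = false by rewrite eq_sym (negbTE ab).
have ab' : (a == b) = false by rewrite (negbTE ab).
have Hy : forall x', (x' == a) = false -> (x' == b) = false -> (a == x') = false /\ (b == x') = false.
  by move=> x' h1 h2; rewrite ![_ == x']eq_sym h1 h2.
case: (eqVneq x a) => [ex|xa]; [|case: (eqVneq x b) => [ex|xb]];
(case: (eqVneq y a) => [ey|ya]; [|case: (eqVneq y b) => [ey|yb]]);
try subst x; try subst y;
rewrite ?eqxx ?ab' ?ba /= ?sum_lin2 ?sum_lin2r !(gram_lt FU lt) ?eqxx ?ab' ?ba
  ?(negbTE xa) ?(negbTE xb) ?(negbTE ya) ?(negbTE yb)
  ?[a == x]eq_sym ?[b == x]eq_sym ?[a == y]eq_sym ?[b == y]eq_sym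
  ?(negbTE xa) ?(negbTE xb) ?(negbTE ya) ?(negbTE yb) /=; try nra.
Qed.


Definition M (U : var) (i : 'I_k) (x y : 'I_r) : R := \sum_(p < n i) U i p x * Gd U i p y.

Lemma Dobj_mode (U V : var) i0 : (forall i p y, i != i0 -> V i p y = 0) ->
  Dobj U V = \sum_(p < n i0) \sum_(y < r) Gd U i0 p y * V i0 p y.
Proof.
move=> H; rewrite /Dobj (bigD1 i0) //= [X in _ + X]big1 ?addr0 // => i ne.
by apply: big1 => p _; apply: big1 => y _; rewrite H // mulr0.
Qed.

Lemma sum_if2 (m : nat) (F : 'I_m -> R) (a b : 'I_m) (X Y : R) : a != b ->
  \sum_(y < m) F y * (if y == a then X else if y == b then Y else 0) = F a * X + F b * Y.
Proof.
move=> ab; rewrite (bigD1 a) //= eqxx (bigD1 b) //=; last by rewrite eq_sym.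
rewrite eq_sym (negbTE ab) eqxx big1 ?addr0 // => y /andP [ya yb].
by rewrite (negbTE ya) (negbTE yb) mulr0.
Qed.

Lemma sum_if1 (m : nat) (F : 'I_m -> R) (a : 'I_m) (X : R) :
  \sum_(y < m) F y * (if y == a then X else 0) = F a * X.
Proof.
rewrite (bigD1 a) //= eqxx big1 ?addr0 // => y ya.
by rewrite (negbTE ya) mulr0.
Qed.

Lemma Msym s (U : var) (i0 : 'I_k) (a b : 'I_r) : local_maximizer s A U -> (i0 < s)%N ->
  M U i0 a b = M U i0 b a.
Proof.
move=> LM lt; case: (eqVneq a b) => [-> //|ab].
have := curve_zero _ _ _ _ LM (curveR_feas _ _ _ _ _ LM.1 lt ab) (curveR_deriv U i0 a b) (curveR0 U i0 a b).
rewrite (Dobj_mode _ _ i0); last by move=> i p y ne; rewrite mxE (negbTE ne).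
under eq_bigr => p _ do under eq_bigr => y _ do rewrite mxE eqxx.
under eq_bigr => p _ do rewrite sum_if2 //.
move=> H.
have : 2 * M U i0 b a - 2 * M U i0 a b = 0.
  rewrite -[RHS]H /M !mulr_sumr -sumrN -big_split /=; apply: eq_bigr => p _; ring.
lra.
Qed.

Lemma colB_zero s (U W : var) (i0 : 'I_k) (a : 'I_r) : local_maximizer s A U ->
  \sum_(p < n i0) W i0 p a * U i0 p a = 0 ->
  ((i0 < s)%N -> forall y, \sum_(p < n i0) W i0 p a * U i0 p y = 0) ->
  \sum_(p < n i0) Gd U i0 p a * W i0 p a = 0.
Proof.
move=> LM h1 h2.
have := curve_zero _ _ _ _ LM (curveB_feas _ _ _ _ _ LM.1 h1 h2) (curveB_deriv U W i0 a) (curveB0 U W i0 a).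
rewrite (Dobj_mode _ _ i0); last by move=> i p y ne; rewrite mxE (negbTE ne).
under eq_bigr => p _ do under eq_bigr => y _ do rewrite mxE eqxx /=.
under eq_bigr => p _ do rewrite sum_if1.
move=> H; have : 2 * \sum_(p < n i0) Gd U i0 p a * W i0 p a = 0.
  by rewrite -[RHS]H mulr_sumr; apply: eq_bigr => p _; ring.
lra.
Qed.

Lemma sq_sum0 (m : nat) (F : 'I_m -> R) : \sum_(p < m) F p * F p = 0 -> forall p, F p = 0.
Proof.
move=> H p.
have ge : forall i : 'I_m, true -> 0 <= F i * F i by move=> i _; rewrite -expr2 sqr_ge0.
have := psumr_eq0P ge H isT => /(_ p).
by move/eqP; rewrite mulf_eq0 orbb => /eqP.
Qed.


Lemma Gcol_lt s (U : var) (i0 : 'I_k) : local_maximizer s A U -> (i0 < s)%N ->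
  forall p a, Gd U i0 p a = \sum_(b < r) U i0 p b * M U i0 b a.
Proof.
move=> LM lt p a; have FU := LM.1.
pose W : var := fun i => \matrix_(p, y) (Gd U i p y - \sum_(b < r) U i p b * M U i b y).
have WE : forall q y, W i0 q y = Gd U i0 q y - \sum_(b < r) U i0 q b * M U i0 b y.
  by move=> q y; rewrite /W mxE.
have h2 : forall y, \sum_(q < n i0) W i0 q a * U i0 q y = 0.
  move=> y; under eq_bigr => q _ do rewrite WE mulrBl mulr_suml.
  rewrite sumrB.
  have -> : \sum_(q < n i0) Gd U i0 q a * U i0 q y = M U i0 y a.
    by apply: eq_bigr => q _; rewrite mulrC.
  rewrite exchange_big /=.
  have -> : \sum_(b < r) \sum_(q < n i0) U i0 q b * M U i0 b a * U i0 q y =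
            \sum_(b < r) M U i0 b a * (b == y)%:R.
    apply: eq_bigr => b _; rewrite -(gram_lt FU lt) mulr_sumr.
    by apply: eq_bigr => q _; ring.
  rewrite (bigD1 y) //= eqxx mulr1 big1 ?addr0 ?subrr // => b /negbTE ->.
  by rewrite mulr0.
have Z := colB_zero _ _ _ _ _ LM (h2 a) (fun _ => h2).
have : \sum_(q < n i0) W i0 q a * W i0 q a = 0.
  transitivity (\sum_(q < n i0) W i0 q a *
                  (Gd U i0 q a - \sum_(b < r) U i0 q b * M U i0 b a)).
    by apply: eq_bigr => q _; rewrite [X in _ * X]WE.
  under eq_bigr => q _ do rewrite mulrBr mulr_sumr.
  rewrite sumrB.
  have -> : \sum_(q < n i0) W i0 q a * Gd U i0 q a = 0.
    by rewrite -[RHS]Z; apply: eq_bigr => q _; rewrite mulrC.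
  rewrite exchange_big /= big1 ?subrr // => b _.
  transitivity (M U i0 b a * \sum_(q < n i0) W i0 q a * U i0 q b).
    by rewrite mulr_sumr; apply: eq_bigr => q _; ring.
  by rewrite h2 mulr0.
move/sq_sum0 => /(_ p); rewrite WE => /eqP; rewrite subr_eq0 => /eqP //.
Qed.

Lemma Gcol_ge s (U : var) (i0 : 'I_k) : local_maximizer s A U -> ~~ (i0 < s)%N ->
  forall p a, Gd U i0 p a = M U i0 a a * U i0 p a.
Proof.
move=> LM ge p a; have FU := LM.1.
pose W : var := fun i => \matrix_(p, y) (Gd U i p y - M U i y y * U i p y).
have WE : forall q y, W i0 q y = Gd U i0 q y - M U i0 y y * U i0 q y.
  by move=> q y; rewrite /W mxE.
have h1 : \sum_(q < n i0) W i0 q a * U i0 q a = 0.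
  under eq_bigr => q _ do rewrite WE mulrBl.
  rewrite sumrB.
  have -> : \sum_(q < n i0) Gd U i0 q a * U i0 q a = M U i0 a a.
    by apply: eq_bigr => q _; rewrite mulrC.
  have -> : \sum_(q < n i0) M U i0 a a * U i0 q a * U i0 q a = M U i0 a a.
    by rewrite -[RHS]mulr1 -(gram_diag (i:=i0) (a:=a) FU) mulr_sumr; apply: eq_bigr => q _; ring.
  by rewrite subrr.
have Z := colB_zero _ _ _ _ _ LM h1 (fun lt => False_ind _ (negP ge lt)).
have : \sum_(q < n i0) W i0 q a * W i0 q a = 0.
  transitivity (\sum_(q < n i0) W i0 q a * (Gd U i0 q a - M U i0 a a * U i0 q a)).
    by apply: eq_bigr => q _; rewrite [X in _ * X]WE.
  under eq_bigr => q _ do rewrite mulrBr.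
  rewrite sumrB.
  have -> : \sum_(q < n i0) W i0 q a * Gd U i0 q a = 0.
    by rewrite -[RHS]Z; apply: eq_bigr => q _; rewrite mulrC.
  have -> : \sum_(q < n i0) W i0 q a * (M U i0 a a * U i0 q a) = 0.
    by rewrite -[RHS](mulr0 (M U i0 a a)) -[in RHS]h1 mulr_sumr; apply: eq_bigr => q _; ring.
  by rewrite subrr.
move/sq_sum0 => /(_ p); rewrite WE => /eqP; rewrite subr_eq0 => /eqP //.
Qed.


Definition lamf (U : var) (x : 'I_k * 'I_r * 'I_r) : R :=
  let: (i, a, b) := x in if a == b then M U i a a / 2 else M U i a b.

Lemma sum_ifeq (m : nat) (F : 'I_m -> R) (a : 'I_m) :
  \sum_(b < m) (if a == b then F b else 0) = F a.
Proof.
rewrite (bigD1 a) //= eqxx big1 ?addr0 // => b ba.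
by rewrite eq_sym (negbTE ba).
Qed.

Lemma kkt_id s (U V : var) : local_maximizer s A U ->
  Dobj U V = \sum_(c : clabel k r s) lamf U (val c) * Dg (val c) U V.
Proof.
move=> LM.
rewrite (sum_clabel s (fun x => lamf U x * Dg x U V)) big_mkcond sum_triple /Dobj.
apply: eq_bigr => i _.
pose X (a b : 'I_r) := \sum_(p < n i) V i p a * U i p b.
have DgE : forall a b, Dg (i, a, b) U V = X a b + X b a.
  move=> a b; rewrite /= big_split /=; congr (_ + _).
  by apply: eq_bigr => p _; rewrite mulrC.
case: (ltnP i s) => lt.
  transitivity (\sum_(a < r) \sum_(b < r) M U i a b * X a b).
    under eq_bigr => p _ do under eq_bigr => y _ do rewrite (Gcol_lt _ _ _ LM lt) mulr_suml.
    rewrite exchange_big /=; apply: eq_bigr => y _; rewrite exchange_big /=.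
    apply: eq_bigr => b _; rewrite /X mulr_sumr (Msym _ _ _ y b LM lt).
    by apply: eq_bigr => p _; ring.
  rewrite /cvalid lt.
  pose L (a b : 'I_r) := if (a <= b)%N then lamf U (i, a, b) else 0.
  have ML : forall a b, M U i a b = L a b + L b a.
    move=> a b; rewrite /L /lamf.
    case: (ltngtP a b) => ab.
    - rewrite addr0.
      by have -> : (a == b) = false by apply/negbTE; rewrite neq_ltn ab.
    - rewrite add0r (Msym _ _ _ a b LM lt).
      by have -> : (b == a) = false by apply/negbTE; rewrite neq_ltn ab.
    - have e : a = b by apply: val_inj.
      by subst b; rewrite eqxx -splitr.
  transitivity (\sum_(a < r) \sum_(b < r) (L a b * X a b + L a b * X b a)).
    under eq_bigr => a _ do under eq_bigr => b _ do rewrite ML mulrDl.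
    under eq_bigr => a _ do rewrite big_split /=.
    under [RHS]eq_bigr => a _ do rewrite big_split /=.
    by rewrite !big_split /=; congr (_ + _); exact: exchange_big.
  apply: eq_bigr => a _; apply: eq_bigr => b _; rewrite /L DgE.
  by case: ifP => _; rewrite ?mulrDr ?mul0r ?addr0.
rewrite /cvalid ltnNge lt /=.
have nlt : ~~ (i < s)%N by rewrite -leqNgt.
under [RHS]eq_bigr => a _ do rewrite sum_ifeq eqxx.
under eq_bigr => p _ do under eq_bigr => y _ do rewrite (Gcol_ge _ _ _ LM nlt).
rewrite exchange_big /=; apply: eq_bigr => y _.
by rewrite mulr_sumr; apply: eq_bigr => p _; field.
Qed.

End Main.

Theorem proposition4p2 (R : realType) (k : nat) (n : 'I_k -> nat) (r s : nat)
    (A : tensor R n) :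
  (1 <= s <= k)%N ->
  (forall i : 'I_k, (i < s)%N -> (r <= n i)%N) ->
  (forall U : var R n r, feasible s U -> LICQ s U) /\
  (forall U : var R n r, local_maximizer s A U ->
     exists lam : {ffun clabel k r s -> R},
       KKT A U lam /\ forall mu : {ffun clabel k r s -> R}, KKT A U mu -> mu = lam).
Proof.
move=> _ _; split; first by move=> U FU; exact: licq.
move=> U LM.
have KL : KKT A U [ffun c : clabel k r s => @lamf R k n r A U (val c)].
  split; first exact: LM.1.
  move=> V; rewrite dir_obj (@kkt_id R k n r A s U V LM); apply: eq_bigr => c _.
  by rewrite ffunE dir_cfun.
exists [ffun c : clabel k r s => @lamf R k n r A U (val c)]; split => // mu [_ Hmu].
apply/ffunP => c.
have L := @licq R k n r s U LM.1.
set lam := [ffun c : clabel k r s => @lamf R k n r A U (val c)] in KL *.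
apply/eqP; rewrite -subr_eq0; apply/eqP.
have -> : mu c - lam c = [ffun c => mu c - lam c] c by rewrite ffunE.
apply: L => V; under eq_bigr => c' _ do rewrite ffunE mulrBl.
rewrite sumrB -Hmu; case: KL => _ ->; exact: subrr.
Qed.
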